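(* Let $k>0$ and $g(u;a)=u(1-u)(u-a)$. Define $$a_*^+(k)=\frac{\sqrt{4k+k^2}-k}{2},\qquad a_1^+(k)=\min\Big\{\frac{2\sqrt k}{2+\sqrt k},1\Big\},$$ and for $a_*^+(k)\le a\le 1$, $$d^+_{\min}(a,k)=\frac{2a^2+a(k-4)+4-k-2(2-a)\sqrt{a^2+ka-k}}{(4+k)^2},$$ $$d^+_{\max}(a,k)=\begin{cases}\dfrac{a^2}{4k}, & a\in(a_1^+(k),1],\\[2mm]\dfrac{2a^2+a(k-4)+4-k+2(2-a)\sqrt{a^2+ka-k}}{(4+k)^2}, & a\in[a_*^+(k),a_1^+(k)].\end{cases}$$ Then: (i) $d^+_{\min},d^+_{\max}\in C([a_*^+(k),1]\times(0,\infty);\mathbb R)$ and $0\le d^+_{\min}(a,k)\le d^+_{\max}(a,k)\le d^+(a,k)$ for all $a\in[a_*^+(k),1]$, where $d^+(a,k)=\max_{y\in(1-a,1)}\frac{-g(1-y;a)}{ky}$; (ii) $d^+_{\max}(a_*^+(k),k)=d^+_{\min}(a_*^+(k),k)$; (iii) $$\mathcal D^+(k)=\{(a,d)\in\mathcal H:\ a>a_*^+(k),\ d^+_{\min}(a,k)<d<d^+_{\max}(a,k)\}.$$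
   Context: Let $\mathcal H=(0,1)\times(0,\infty)$. For a nonlinearity $f(u;a)$, $K>0$, $a,A\in(0,1)$ let $d^\diamond_{f,K}(A;a)=\inf\{d>0:\ d(K+1)(A-v)-f(A;a)\ge -f(v;a)\ \forall v\in[0,A]\}$ and $\mathcal D^-_f(K)=\{(a,d)\in\mathcal H:\ d^\diamond_{f,K}(A;a)<d<f(A;a)/A$ for some $A\in(a,1)\}$. With $\tilde g(v;b):=-g(1-v;1-b)$ (for the cubic, $\tilde g=g$), define $\mathcal D^+(k)=\{(a,d)\in\mathcal H:\ (1-a,dk)\in\mathcal D^-_{\tilde g}(1/k)\}$. *)

(* Defs.v *)
From HB Require Import structures.
From mathcomp Require Import all_boot all_order all_algebra.
From mathcomp Require Import all_classical all_reals all_analysis.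
Set Implicit Arguments. Unset Strict Implicit. Unset Printing Implicit Defensive.
Import Order.TTheory GRing.Theory Num.Theory.
Import numFieldNormedType.Exports.
Local Open Scope classical_set_scope.
Local Open Scope ring_scope.

Section Defs.
Variable R : realType.

Definition g (u a : R) : R := u * (1 - u) * (u - a).

Definition gtilde (v b : R) : R := - g (1 - v) (1 - b).

Definition Hset : set (R * R) := [set p | 0 < p.1 < 1 /\ 0 < p.2].

Definition ddiamond (f : R -> R -> R) (K A a : R) : R :=
  inf [set d : R | 0 < d /\
        forall v : R, 0 <= v <= A -> d * (K + 1) * (A - v) - f A a >= - f v a].

Definition Dminus (f : R -> R -> R) (K : R) : set (R * R) :=
  [set p | Hset p /\ exists A : R, p.1 < A < 1 /\
           ddiamond f K A p.1 < p.2 < f A p.1 / A].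

Definition Dplus (k : R) : set (R * R) :=
  [set p | Hset p /\ Dminus gtilde (1 / k) (1 - p.1, p.2 * k)].

Definition astar (k : R) : R := (Num.sqrt (4 * k + k ^+ 2) - k) / 2.

Definition a1 (k : R) : R :=
  Num.min (2 * Num.sqrt k / (2 + Num.sqrt k)) 1.

Definition dmin (a k : R) : R :=
  (2 * a ^+ 2 + a * (k - 4) + 4 - k - 2 * (2 - a) * Num.sqrt (a ^+ 2 + k * a - k))
  / (4 + k) ^+ 2.

Definition dmax (a k : R) : R :=
  if a1 k < a then a ^+ 2 / (4 * k)
  else (2 * a ^+ 2 + a * (k - 4) + 4 - k + 2 * (2 - a) * Num.sqrt (a ^+ 2 + k * a - k))
       / (4 + k) ^+ 2.

(* d^+(a,k) = max_{y in (1-a,1)} -g(1-y;a)/(k y), written as the supremum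
   of the set of values (the maximum is attained). *)
Definition dplus (a k : R) : R :=
  sup [set - g (1 - y) a / (k * y) | y in `]1 - a, 1[].

Definition adom : set (R * R) :=
  [set p | 0 < p.2 /\ astar p.2 <= p.1 <= 1].

End Defs.

(* Main.v *)
Require Import Defs.
From HB Require Import structures.
From mathcomp Require Import all_boot all_order all_algebra.
From mathcomp Require Import all_classical all_reals all_analysis.
From mathcomp Require Import ring lra.
Import Order.TTheory GRing.Theory Num.Theory.
Import numFieldNormedType.Exports.
Local Open Scope classical_set_scope.
Local Open Scope ring_scope.


Section Alg.
Variable R : realType.
Implicit Types a k s x d : R.

Definition Dk a k : R := a^+2 + k*a - k.

Lemma eq_mod (u v w Q : R) : w = 0 -> u - v = w * Q -> u = v.
Proof. by move=> -> ; rewrite mul0r => /eqP; rewrite subr_eq0 => /eqP. Qed.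

Lemma star_id a k s x : s^+2 = Dk a k ->
  (k*(2-a)+4*s) * (x*(a-x)*(k+4)^+2 + (2-a-s)*(1-x)*(k+4) - (2-a-s)^+2)
  = (k*(2-a)+4*s+(2-a-s))*(x*(a-x))*(k+4)^+2 + (2-a-s)*((k+4)*x-(k+2*a+2*s))^+2
    + s*(k+4)*(2-a-s)^+2.
Proof.
move=> h; apply: (@eq_mod _ _ (s^+2 - Dk a k) (8 - 4*s + 2*k - k*s - 4*a - a*k)).
  by rewrite h subrr.
rewrite /Dk; ring.
Qed.

Lemma lower a k s x d : 0 < k -> 0 < s -> s^+2 = Dk a k -> 0 <= 2-a-s ->
  x*(a-x) + (2-a-s)/(k+4)*(1-x) - ((2-a-s)/(k+4))^+2 < d*(1+k) ->
  d*k < x*(a-x) -> ((2-a-s)/(k+4))^+2 < d.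
Proof.
move=> k0 s0 h e0 Hq Hc.
set N := k+4; set e := 2-a-s.
have N0 : 0 < N by rewrite /N; lra.
have Hq' : x*(a-x)*N^+2 + e*(1-x)*N - e^+2 < d*(1+k)*N^+2.
  have -> : x*(a-x)*N^+2 + e*(1-x)*N - e^+2 =
     (x*(a-x) + e/N*(1-x) - (e/N)^+2) * N^+2 by field; lra.
  by rewrite ltr_pM2r ?exprn_gt0.
have T0 : 0 < k*(2-a)+4*s by nra.
have := @star_id a k s x h; rewrite -/N -/e => id.
have H1 : (k*(2-a)+4*s+e)*(x*(a-x))*N^+2 + e*(N*x-(k+2*a+2*s))^+2 + s*N*e^+2
    < (k*(2-a)+4*s) * (d*(1+k)*N^+2).
  by rewrite -id ltr_pM2l.
have H2 : (k*(2-a)+4*s+e)*(d*k)*N^+2 <= (k*(2-a)+4*s+e)*(x*(a-x))*N^+2.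
  rewrite ler_pM2r ?exprn_gt0 // ler_pM2l; rewrite /e; lra.
have H3 : 0 <= e*(N*x-(k+2*a+2*s))^+2 by rewrite mulr_ge0 // sqr_ge0.
have H4 : s*N*e^+2 < s*N*(N^+2 * d).
  have -> : s*N*(N^+2*d) = (k*(2-a)+4*s) * (d*(1+k)*N^+2) - (k*(2-a)+4*s+e)*(d*k)*N^+2
    by rewrite /e /N; ring.
  lra.
have H5 : e^+2 < N^+2 * d by rewrite ltr_pM2l // mulr_gt0 in H4.
rewrite expr_div_n ltr_pdivrMr ?exprn_gt0 //; lra.
Qed.

Lemma upper a k s x d : 0 < k -> 0 < s -> s^+2 = Dk a k -> 0 <= k*(2-a) - 4*s ->
  x*(a-x) + (2-a+s)/(k+4)*(1-x) - ((2-a+s)/(k+4))^+2 < d*(1+k) ->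
  d*k < x*(a-x) -> d < ((2-a+s)/(k+4))^+2.
Proof.
move=> k0 s0 h T0 Hq Hc.
set N := k+4; set e := 2-a+s.
have N0 : 0 < N by rewrite /N; lra.
have Hq' : x*(a-x)*N^+2 + e*(1-x)*N - e^+2 < d*(1+k)*N^+2.
  have -> : x*(a-x)*N^+2 + e*(1-x)*N - e^+2 =
     (x*(a-x) + e/N*(1-x) - (e/N)^+2) * N^+2 by field; lra.
  by rewrite ltr_pM2r ?exprn_gt0.
have h' : (-s)^+2 = Dk a k by rewrite sqrrN.
have := @star_id a k (-s) x h'.
have -> : 2 - a - - s = e by rewrite /e; ring.
rewrite -/N => id.
set T := k * (2 - a) + 4 * - s.
have HT : 0 <= T by rewrite /T; lra.
have H2 : T * (x*(a-x)*N^+2 + e*(1-x)*N - e^+2) <= T * (d*(1+k)*N^+2)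
  by apply: ler_wpM2l => //; lra.
rewrite id in H2.
have H3 : k*(T * (d*(1+k)*N^+2)) <= (T*(1+k)*N^+2) * (x*(a-x)).
  have -> : k*(T * (d*(1+k)*N^+2)) = (T*(1+k)*N^+2) * (d*k) by ring.
  apply: ler_wpM2l; last lra.
  have ? : 0 <= T*(1+k) by apply: mulr_ge0; lra.
  by apply: mulr_ge0 => //; apply: exprn_ge0; lra.
have H4 : 0 <= k * (e*(N*x-(k+2*a+2 * - s))^+2).
  have e0 : 0 <= e by rewrite /e; nra.
  apply: mulr_ge0; first lra.
  by apply: mulr_ge0 => //; exact: sqr_ge0.
have H5 : s*N*(x*(a-x)*N^+2) <= s*N*(k*e^+2).
  have E1 : k*((T + e) * (x * (a - x)) * N ^+ 2 + e * (N * x - (k + 2 * a + 2 * - s)) ^+ 2 +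
       - s * N * e ^+ 2) - (T*(1+k)*N^+2) * (x*(a-x)) =
       s*N*(x*(a-x)*N^+2) - s*N*(k*e^+2) + k * (e*(N*x-(k+2*a+2 * - s))^+2).
    by rewrite /T /e /N; ring.
  have : k*((T + e) * (x * (a - x)) * N ^+ 2 + e * (N * x - (k + 2 * a + 2 * - s)) ^+ 2 +
       - s * N * e ^+ 2) <= k*(T * (d*(1+k)*N^+2)) by rewrite ler_pM2l.
  lra.
have H6 : x*(a-x)*N^+2 <= k*e^+2 by rewrite ler_pM2l ?mulr_gt0 in H5.
rewrite expr_div_n ltr_pdivlMr ?exprn_gt0 //.
have : d * k * N^+2 < x*(a-x)*N^+2 by rewrite ltr_pM2r ?exprn_gt0.
move=> H7.
have : d * N^+2 * k < e^+2 * k by lra.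
by rewrite ltr_pM2r.
Qed.

Lemma nofeas a k x d : 0 < k -> 0 < a < 1 -> Dk a k <= 0 ->
  x*(a-x) + (2-a)/(k+4)*(1-x) - ((2-a)/(k+4))^+2 < d*(1+k) ->
  d*k < x*(a-x) -> False.
Proof.
move=> k0 a01 hD Hq Hc.
set N := k+4.
have N0 : 0 < N by rewrite /N; lra.
have Hq' : x*(a-x)*N^+2 + (2-a)*(1-x)*N - (2-a)^+2 < d*(1+k)*N^+2.
  have -> : x*(a-x)*N^+2 + (2-a)*(1-x)*N - (2-a)^+2 =
     (x*(a-x) + (2-a)/N*(1-x) - ((2-a)/N)^+2) * N^+2 by field; lra.
  by rewrite ltr_pM2r ?exprn_gt0.
have E : k*(x*(a-x)*N^+2 + (2-a)*(1-x)*N - (2-a)^+2) - (1+k)*(x*(a-x))*N^+2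
   = (N*x - (a*N+k*(2-a))/2)^+2 - N * Dk a k by rewrite /N /Dk; field.
have H1 : 0 <= (N*x - (a*N+k*(2-a))/2)^+2 - N * Dk a k.
  have : 0 <= (N*x - (a*N+k*(2-a))/2)^+2 by apply: sqr_ge0.
  have : N * Dk a k <= 0 by rewrite pmulr_rle0.
  lra.
have H2 : k*(x*(a-x)*N^+2 + (2-a)*(1-x)*N - (2-a)^+2) < k*(d*(1+k)*N^+2)
  by rewrite ltr_pM2l.
have H3 : (1+k)*N^+2*(d*k) < (1+k)*N^+2*(x*(a-x)).
  by rewrite ltr_pM2l // mulr_gt0 ?exprn_gt0 //; lra.
have : k*(d*(1+k)*N^+2) = (1+k)*N^+2*(d*k) by ring.
lra.
Qed.

Lemma sqr_mod a k s : s^+2 = Dk a k -> (2-a-s)^+2 = 2*a^+2 + a*(k-4) + 4 - k - 2*(2-a)*s.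
Proof. move=> h; apply: (@eq_mod _ _ (s^+2 - Dk a k) 1); first by rewrite h subrr.
rewrite /Dk; ring. Qed.

Lemma Uxp_id a k s : s^+2 = Dk a k ->
  (k+2*a+2*s)*(a*k+2*a-k-2*s) = k*(2-a-s)^+2.
Proof. move=> h; apply: (@eq_mod _ _ (s^+2 - Dk a k) (-4-k)); first by rewrite h subrr.
rewrite /Dk; ring. Qed.

Lemma gap_id a k s x : s^+2 = Dk a k ->
  (k+4)*(4*(x*(a-x)) - k*(1-x)^+2) = ((k+4)*x - (k+2*a-2*s))*((k+2*a+2*s) - (k+4)*x).
Proof. move=> h; apply: (@eq_mod _ _ (s^+2 - Dk a k) (-4)); first by rewrite h subrr.
rewrite /Dk; ring. Qed.

Lemma Uxp a k s : 0 < k -> s^+2 = Dk a k ->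
  let xp := (k+2*a+2*s)/(k+4) in xp*(a-xp) = k*((2-a-s)/(k+4))^+2.
Proof.
move=> k0 h xp; rewrite /xp.
have N0 : k + 4 != 0 by apply: lt0r_neq0; lra.
have -> : (k + 2 * a + 2 * s) / (k + 4) * (a - (k + 2 * a + 2 * s) / (k + 4)) =
   (k+2*a+2*s)*(a*k+2*a-k-2*s) / (k+4)^+2 by field.
by rewrite Uxp_id //; field.
Qed.

Lemma wbig a k s x d : 0 < k -> 0 <= s -> s^+2 = Dk a k -> 4*s <= k*(2-a) -> a <= 1 ->
  0 <= x -> 1-a+x <= (2-a+s)/(k+4) -> d*k < x*(a-x) -> d < ((2-a+s)/(k+4))^+2.
Proof.
move=> k0 s0 h T0 a1 x0 hx Hc.
have h' : (-s)^+2 = Dk a k by rewrite sqrrN.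
have := @Uxp a k (-s) k0 h'; set xm := (k + 2 * a + 2 * - s) / (k + 4).
have -> : 2 - a - - s = 2 - a + s by ring.
move=> U.
have N0 : 0 < k + 4 by lra.
have xmh : a/2 <= xm.
  rewrite /xm ler_pdivlMr //; lra.
have hw : (2-a+s)/(k+4) + xm <= 1.
  rewrite /xm -mulrDl ler_pdivrMr //; lra.
have hx2 : x <= a - xm by lra.
have : x*(a-x) <= xm*(a-xm) by nra.
rewrite U => H.
have : d * k < k * ((2 - a + s) / (k + 4)) ^+ 2 by lra.
by rewrite mulrC ltr_pM2l.
Qed.

Lemma fwd a k x d : 0 < k -> 0 < a < 1 -> 0 < x < a ->
  (forall v, 0 <= v < 1-a+x -> x*(a-x) + v*(1-x) - v^+2 < d*(1+k)) ->
  d*k < x*(a-x) ->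
  0 < Dk a k /\ ((2-a-Num.sqrt (Dk a k))/(k+4))^+2 < d /\
  d < (if k*(2-a) < 4*Num.sqrt (Dk a k) then a^+2/(4*k)
       else ((2-a+Num.sqrt (Dk a k))/(k+4))^+2).
Proof.
move=> k0 a01 x0a Hq Hc.
have N0 : 0 < k + 4 by lra.
have Dpos : 0 < Dk a k.
  rewrite ltNge; apply/negP => hD.
  apply: (@nofeas a k x d) => //; apply: Hq; apply/andP; split.
    by apply: divr_ge0; lra.
  suff : (2 - a) / (k + 4) <= 1 - a by lra.
  rewrite ler_pdivrMr //; move: hD; rewrite /Dk; nra.
set s := Num.sqrt (Dk a k).
have s0 : 0 < s by rewrite sqrtr_gt0.
have h : s^+2 = Dk a k by rewrite sqr_sqrtr // ltW.
have sa : s <= a.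
  have : s^+2 <= a^+2 by rewrite h /Dk; nra.
  by rewrite ler_sqr ?nnegrE; lra.
split => //; split.
  apply: (@lower a k s x d) => //; first lra.
  apply: Hq; apply/andP; split; first by apply: divr_ge0; lra.
  suff : (2 - a - s) / (k + 4) <= 1 - a by lra.
  rewrite ler_pdivrMr //; move: h; rewrite /Dk => h; nra.
case: ifP => hb.
  have : x*(a-x) <= a^+2/4 by have := sqr_ge0 (a - 2*x); nra.
  move=> H; rewrite ltr_pdivlMr; last lra.
  have : d * k * 4 < a^+2 by lra.
  lra.
have hb' : 4*s <= k*(2-a) by rewrite leNgt hb.
have [hw|hw] := ltP ((2-a+s)/(k+4)) (1-a+x).
  apply: (@upper a k s x d) => //; first lra.
  apply: Hq; apply/andP; split => //; apply: divr_ge0; lra.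
apply: (@wbig a k s x d) => //; lra.
Qed.
End Alg.

Arguments Dk {R}.
Section C.
Context {R : realType} {T : topologicalType}.
Implicit Types (f g : T -> R) (p : T).

Lemma cfst (p : R * R) : {for p, continuous (fun q : R * R => q.1)}.
Proof. exact: cvg_fst. Qed.
Lemma csnd (p : R * R) : {for p, continuous (fun q : R * R => q.2)}.
Proof. exact: cvg_snd. Qed.
Lemma cid (p : R) : {for p, continuous (fun q : R => q)}.
Proof. exact: cvg_id. Qed.
Lemma ccst p (c : R) : {for p, continuous (fun _ : T => c)}.
Proof. exact: cvg_cst. Qed.
Lemma cadd f g p : {for p, continuous f} -> {for p, continuous g} ->
  {for p, continuous (fun q => f q + g q)}.
Proof. exact: continuousD. Qed.
Lemma csub f g p : {for p, continuous f} -> {for p, continuous g} ->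
  {for p, continuous (fun q => f q - g q)}.
Proof. exact: continuousB. Qed.
Lemma copp f p : {for p, continuous f} -> {for p, continuous (fun q => - f q)}.
Proof. exact: continuousN. Qed.
Lemma cmul f g p : {for p, continuous f} -> {for p, continuous g} ->
  {for p, continuous (fun q => f q * g q)}.
Proof. exact: continuousM. Qed.
Lemma cinv f p : f p != 0 -> {for p, continuous f} ->
  {for p, continuous (fun q => (f q)^-1)}.
Proof. exact: continuousV. Qed.
Lemma cdiv f g p : g p != 0 -> {for p, continuous f} -> {for p, continuous g} ->
  {for p, continuous (fun q => f q / g q)}.
Proof. by move=> g0 cf cg; apply: cmul => //; apply: cinv. Qed.
Lemma cexp f p n : {for p, continuous f} -> {for p, continuous (fun q => f q ^+ n)}.
Proof.
move=> cf; elim: n => [|n IH]; first exact: ccst.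
have -> : (fun q => f q ^+ n.+1) = (fun q => f q * f q ^+ n).
  by apply: funext => q; rewrite exprS.
exact: cmul.
Qed.
Lemma csqrt f p : {for p, continuous f} -> {for p, continuous (fun q => Num.sqrt (f q))}.
Proof. move=> cf; apply: continuous_comp => //; exact: sqrt_continuous. Qed.
Lemma cmax f g p : {for p, continuous f} -> {for p, continuous g} ->
  {for p, continuous (fun q => Num.max (f q) (g q))}.
Proof. exact: continuous_max. Qed.
End C.

Ltac cont := repeat first [ apply: cadd | apply: csub | apply: cmul | apply: cexp
  | apply: copp | apply: csqrt | apply: cmax | apply: cfst | apply: csnd | apply: cid | apply: ccst ].
Ltac contT T := repeat (lazymatch goal with |- is_true _ => fail | _ =>
  first [ apply: cfst | apply: csnd | apply: cid | apply: (@ccst _ T)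
  | apply: (@cadd _ T) | apply: (@csub _ T) | apply: (@cmul _ T)
  | apply: (@cexp _ T) | apply: (@copp _ T) | apply: (@csqrt _ T) | apply: (@cmax _ T)
  | apply: (@cinv _ T) ] end).
Lemma forP {T U : topologicalType} (f : T -> U) : (forall p, {for p, continuous f}) -> continuous f.
Proof. exact. Qed.
Section B.
Variable R : realType.
Implicit Types a k s x d : R.

Lemma bwd a k d : 0 < k -> 0 < a < 1 -> 0 < Dk a k ->
  ((2-a-Num.sqrt (Dk a k))/(k+4))^+2 < d ->
  d < (if k*(2-a) < 4*Num.sqrt (Dk a k) then a^+2/(4*k)
       else ((2-a+Num.sqrt (Dk a k))/(k+4))^+2) ->
  exists x, [/\ 0 < x < a, x*(a-x) + (1-x)^+2/4 < d*(1+k) & d*k < x*(a-x)].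
Proof.
move=> k0 a01 Dp Hlo Hhi.
set s := Num.sqrt (Dk a k) in Hlo Hhi.
have s0 : 0 < s by rewrite sqrtr_gt0.
have h : s^+2 = Dk a k by rewrite sqr_sqrtr // ltW.
have sa : s <= a.
  have : s^+2 <= a^+2 by rewrite h /Dk; nra.
  by rewrite ler_sqr ?nnegrE; lra.
have N0 : 0 < k + 4 by lra.
set xp := (k+2*a+2*s)/(k+4); set xm := (k+2*a-2*s)/(k+4).
pose U y := y*(a-y)/k; pose L y := (y*(a-y) + (1-y)^+2/4)/(1+k).
have UL y : U y - L y = (4*(y*(a-y)) - k*(1-y)^+2)/(4*k*(1+k)).
  rewrite /U /L; field; lra.
have key y : xm < y < xp -> L y < U y.
  move=> /andP[h1 h2].
  have := @gap_id R a k s y h.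
  have f1 : 0 < (k+4)*y - (k+2*a-2*s).
    by move: h1; rewrite /xm ltr_pdivrMr // => ?; lra.
  have f2 : 0 < (k+2*a+2*s) - (k+4)*y.
    by move: h2; rewrite /xp ltr_pdivlMr // => ?; lra.
  move=> E.
  have : 0 < (k + 4) * (4 * (y * (a - y)) - k * (1 - y) ^+ 2) by rewrite E mulr_gt0.
  rewrite pmulr_rgt0 // => H.
  have : 0 < U y - L y by rewrite UL divr_gt0 //; nra.
  lra.
have Lxp : L xp = U xp.
  have := @gap_id R a k s xp h.
  have -> : (k + 2 * a + 2 * s) - (k + 4) * xp = 0 by rewrite /xp; field; lra.
  rewrite mulr0 => /eqP; rewrite mulf_eq0 (negbTE (lt0r_neq0 N0)) /= => /eqP E.
  by apply/eqP; rewrite eq_sym -subr_eq0 UL E mul0r.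
have UxpE : U xp = ((2-a-s)/(k+4))^+2.
  by rewrite /U (@Uxp R a k s k0 h) mulrC mulKf //; apply: lt0r_neq0.
have [ys [hys1 hys2 hys3]] : exists ys, [/\ xm <= ys, ys <= xp & d < U ys].
  move: Hhi; case: ifP => hb Hhi.
    exists (a/2); split.
    - by rewrite /xm ler_pdivrMr //; lra.
    - by rewrite /xp ler_pdivlMr //; nra.
    - by rewrite /U; move: Hhi; congr (_ < _); field; lra.
  exists xm; split => //.
    by rewrite /xm /xp ler_pM2r ?invr_gt0 //; lra.
  have h' : (-s)^+2 = Dk a k by rewrite sqrrN.
  have := @Uxp R a k (-s) k0 h'.
  have -> : (k + 2 * a + 2 * - s) = k + 2*a - 2*s by ring.
  have -> : 2 - a - - s = 2 - a + s by ring.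
  rewrite -/xm => E; rewrite /U E mulrC mulKf //; apply: lt0r_neq0 => //.
have d0 : 0 < d by apply: le_lt_trans Hlo; apply: sqr_ge0.
have inA y : d < U y -> 0 < y < a.
  rewrite /U ltr_pdivlMr // => H.
  have : 0 < y * (a - y) by nra.
  move=> H2; apply/andP; split; nra.
have conv y : L y < d -> d < U y ->
    [/\ 0 < y < a, y*(a-y) + (1-y)^+2/4 < d*(1+k) & d*k < y*(a-y)].
  move=> H1 H2; split; first exact: inA.
    by move: H1; rewrite /L ltr_pdivrMr //; lra.
  by move: H2; rewrite /U ltr_pdivlMr.
have [hL|hL] := ltP (L ys) d.
  by exists ys; apply: conv.
pose G y := U y + L y.
have cG : {within `[ys, xp], continuous G}.
  apply: continuous_subspaceT; apply: forP => y; rewrite /G /U /L; cont.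
have [c cin Gc] : exists2 c, c \in `[ys, xp] & G c = 2 * d.
  apply: IVT => //; apply/andP; split.
    by rewrite ge_min; apply/orP; right; rewrite /G Lxp UxpE; lra.
  by rewrite le_max; apply/orP; left; rewrite /G; lra.
move: cin; rewrite in_itv /= => /andP[c1 c2].
have c1' : ys < c.
  rewrite lt_neqAle c1 andbT; apply/negP => /eqP E.
  by move: Gc; rewrite -E /G; lra.
have c2' : c < xp.
  rewrite lt_neqAle c2 andbT; apply/negP => /eqP E.
  by move: Gc; rewrite E /G Lxp UxpE; lra.
have := key c; rewrite (le_lt_trans hys1 c1') c2' => /(_ isT) K.
exists c; apply: conv; move: Gc; rewrite /G; lra.
Qed.
End B.
Section M3.
Variable R : realType.
Implicit Types a k s x d : R.

Lemma astar_le a k : 0 < k -> 0 <= a -> (astar k <= a) = (0 <= Dk a k).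
Proof.
move=> k0 a0; rewrite /astar /Dk.
set r := Num.sqrt (4*k + k^+2).
have r0 : 0 <= r by apply: sqrtr_ge0.
have hr : r^+2 = 4*k + k^+2 by rewrite sqr_sqrtr //; nra.
apply/idP/idP => H.
  have : r <= 2*a + k by move: H; rewrite ler_pdivrMr; lra.
  move=> H2; have : r^+2 <= (2*a+k)^+2 by rewrite ler_sqr ?nnegrE //; lra.
  nra.
rewrite ler_pdivrMr; last lra.
have : r^+2 <= (2*a+k)^+2 by rewrite hr; nra.
rewrite ler_sqr ?nnegrE //; lra.
Qed.

Lemma astar_lt a k : 0 < k -> 0 <= a -> (astar k < a) = (0 < Dk a k).
Proof.
move=> k0 a0; rewrite /astar /Dk.
set r := Num.sqrt (4*k + k^+2).
have r0 : 0 <= r by apply: sqrtr_ge0.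
have hr : r^+2 = 4*k + k^+2 by rewrite sqr_sqrtr //; nra.
apply/idP/idP => H.
  have : r < 2*a + k by move: H; rewrite ltr_pdivrMr; lra.
  move=> H2; have : r^+2 < (2*a+k)^+2 by rewrite ltr_sqr ?nnegrE //; lra.
  nra.
rewrite ltr_pdivrMr; last lra.
have : r^+2 < (2*a+k)^+2 by rewrite hr; nra.
rewrite ltr_sqr ?nnegrE //; lra.
Qed.

Lemma astar_D0 k : 0 < k -> Dk (astar k) k = 0.
Proof.
move=> k0; rewrite /astar /Dk.
set r := Num.sqrt (4*k + k^+2).
have hr : r^+2 = 4*k + k^+2 by rewrite sqr_sqrtr //; nra.
apply: (@eq_mod R _ _ (r^+2 - (4*k+k^+2)) (1/4)); first by rewrite hr subrr.
by field.
Qed.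

Lemma astar_pos k : 0 < k -> 0 < astar k < 1.
Proof.
move=> k0; rewrite /astar.
set r := Num.sqrt (4*k + k^+2).
have r0 : 0 <= r by apply: sqrtr_ge0.
have hr : r^+2 = 4*k + k^+2 by rewrite sqr_sqrtr //; nra.
have h1 : k < r by rewrite -(ltr_pXn2r (n:=2)) ?nnegrE //; lra.
have h2 : r < k + 2 by rewrite -(ltr_pXn2r (n:=2)) ?nnegrE //; lra.
apply/andP; split; [apply: divr_gt0|rewrite ltr_pdivrMr]; lra.
Qed.

Lemma a1_iff a k : 0 < a <= 1 -> 0 < k -> 0 <= Dk a k ->
  (a1 k < a) = (k*(2-a) < 4*Num.sqrt (Dk a k)).
Proof.
move=> /andP[a0 a1'] k0 D0.
set s := Num.sqrt (Dk a k).
have s0 : 0 <= s by apply: sqrtr_ge0.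
have hs : s^+2 = Dk a k by rewrite sqr_sqrtr.
set t := Num.sqrt k.
have t0 : 0 < t by rewrite sqrtr_gt0.
have ht : t^+2 = k by rewrite sqr_sqrtr // ltW.
have E : (k*(2-a)-4*s)*(k*(2-a)+4*s) = (t*(2-a)-2*a)*(t*(2-a)+2*a)*(k+4).
  rewrite -ht; move: hs; rewrite /Dk -ht => hs.
  apply: (@eq_mod R _ _ (s^+2 - (a ^+ 2 + t ^+ 2 * a - t ^+ 2)) (-16)); first by rewrite hs subrr.
  ring.
rewrite /a1 gt_min [1 < a]ltNge a1' orbF -/t ltr_pdivrMr; last lra.
have P1 : 0 < k*(2-a)+4*s by nra.
have P2 : 0 < (t*(2-a)+2*a)*(k+4) by apply: mulr_gt0; nra.
apply/idP/idP => H.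
  have : (t*(2-a)-2*a)*((t*(2-a)+2*a)*(k+4)) < 0 by rewrite pmulr_llt0 //; lra.
  rewrite mulrA -E pmulr_llt0 //; lra.
have : (k*(2-a)-4*s)*(k*(2-a)+4*s) < 0 by rewrite pmulr_llt0 //; lra.
rewrite E -mulrA pmulr_llt0 //; lra.
Qed.

Lemma dmin_eq a k : 0 < k -> 0 <= Dk a k ->
  dmin a k = ((2-a-Num.sqrt (Dk a k))/(k+4))^+2.
Proof.
move=> k0 D0; rewrite /dmin expr_div_n (@sqr_mod R a k) ?sqr_sqrtr //.
by rewrite /Dk [k+4]addrC.
Qed.

Lemma dmax_eq a k : 0 < a <= 1 -> 0 < k -> 0 <= Dk a k ->
  dmax a k = if k*(2-a) < 4*Num.sqrt (Dk a k) then a^+2/(4*k)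
             else ((2-a+Num.sqrt (Dk a k))/(k+4))^+2.
Proof.
move=> a01 k0 D0; rewrite /dmax a1_iff //; case: ifP => // _.
have h : (- Num.sqrt (Dk a k))^+2 = Dk a k by rewrite sqrrN sqr_sqrtr.
have := @sqr_mod R a k _ h.
have -> : 2 - a - - Num.sqrt (Dk a k) = 2 - a + Num.sqrt (Dk a k) by ring.
move=> E; rewrite expr_div_n E /Dk [k+4]addrC; congr (_ / _); ring.
Qed.

Lemma dplus_eq a k : 0 < a <= 1 -> 0 < k -> dplus a k = a^+2/(4*k).
Proof.
move=> /andP[a0 a1'] k0; rewrite /dplus.
have ub : ubound [set - g (1 - y) a / (k * y) | y in `]1 - a, 1[] (a^+2/(4*k)).
  move=> z [y]; rewrite /= in_itv /= => /andP[y1 y2] <-.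
  rewrite /g.
  have -> : - ((1 - y) * (1 - (1 - y)) * (1 - y - a)) / (k * y) = (1-y)*(y-1+a)/k.
    by field; apply/andP; split; apply: lt0r_neq0 => //; lra.
  rewrite ler_pdivrMr //.
  have -> : a^+2/(4*k)*k = a^+2/4 by field; lra.
  have := sqr_ge0 (2*y - 2 + a); nra.
have mem : [set - g (1 - y) a / (k * y) | y in `]1 - a, 1[] (a^+2/(4*k)).
  exists (1 - a/2); first by rewrite /= in_itv /=; apply/andP; split; lra.
  rewrite /g; field; apply/andP; split; apply: lt0r_neq0 => //; lra.
apply/eqP; rewrite eq_le; apply/andP; split.
  by apply: ge_sup => //; exists (a^+2/(4*k)).
by apply: ub_le_sup => //; exists (a^+2/(4*k)).
Qed.
End M3.
Section M4.
Variable R : realType.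
Implicit Types a k s x d : R.

Lemma gt_eq a v : gtilde v (1-a) = v*(1-v)*(v-1+a) :> R.
Proof. rewrite /gtilde /g; ring. Qed.

Lemma Dplus_char k : 0 < k ->
  Dplus k = [set p : R * R | Hset p /\ astar k < p.1 /\ dmin p.1 k < p.2 < dmax p.1 k].
Proof.
move=> k0; apply/seteqP; split => -[a d] /=.
  rewrite /Dplus /Dminus /Hset /= => -[[/andP[a0 a1'] d0] [_ [A [/andP[A1 A2] /andP[Hdd Hup]]]]].
  rewrite /ddiamond in Hdd.
  lazymatch type of Hdd with is_true (inf ?S0 < _) => set S := S0 in Hdd end.
  set x := A - 1 + a.
  have x0a : 0 < x < a by rewrite /x; apply/andP; split; lra.
  have A0 : 0 < A by lra.
  have Hc : d*k < x*(a-x).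
    move: Hup; rewrite gt_eq.
    have -> : A * (1 - A) * (A - 1 + a) / A = x*(a-x) by rewrite /x; field; lra.
    by [].
  have Sne : S !=set0.
    exists (3*k/(1+k)); split; first by apply: divr_gt0; lra.
    move=> v /andP[v0 vA]; rewrite !gt_eq.
    have -> : 3 * k / (1 + k) * (1 / k + 1) = 3 by field; lra.
    have E : A * (1 - A) * (A - 1 + a) - v * (1 - v) * (v - 1 + a) =
       (A - v) * (x*(a-x) + v*(1-x) - v^+2) by rewrite /x; ring.
    have : (A - v) * (x*(a-x) + v*(1-x) - v^+2) <= (A-v) * 3.
      apply: ler_wpM2l; first lra.
      move: x0a; rewrite /x => ?; nra.
    lra.
  have [d' [d'0 Hd'] d'lt] := inf_lt Sne Hdd.
  have Hq : forall v, 0 <= v < 1-a+x -> x*(a-x) + v*(1-x) - v^+2 < d*(1+k).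
    move=> v /andP[v0 vA].
    have vA' : v <= A by rewrite /x in vA; lra.
    have := Hd' v; rewrite v0 vA' !gt_eq => /(_ isT) H.
    have E : A * (1 - A) * (A - 1 + a) - v * (1 - v) * (v - 1 + a) =
       (A - v) * (x*(a-x) + v*(1-x) - v^+2) by rewrite /x; ring.
    have H2 : (A - v) * (x*(a-x) + v*(1-x) - v^+2) <= (A-v) * (d' * (1/k+1)) by lra.
    have H3 : x*(a-x) + v*(1-x) - v^+2 <= d' * (1/k+1).
      by rewrite -(ler_pM2l (_ : 0 < A - v)) //; rewrite /x in vA; lra.
    have H4 : d' * (1/k+1) < d * k * (1/k + 1) by rewrite ltr_pM2r //; 
      apply: addr_gt0 => //; apply: divr_gt0.
    have -> : d * (1 + k) = d * k * (1/k+1) by field; lra.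
    lra.
  have a01 : 0 < a < 1 by apply/andP.
  have [Dp [Hlo Hhi]] := @fwd R a k x d k0 a01 x0a Hq Hc.
  have D0 : 0 <= Dk a k by lra.
  split; first by split => //; apply/andP.
  rewrite astar_lt //; last lra.
  split => //; rewrite dmin_eq // dmax_eq //; first by apply/andP.
  by apply/andP; split; lra.
move=> [[/andP[a0 a1'] d0] [Ha /andP[Hlo Hhi]]].
have Dp : 0 < Dk a k by rewrite -astar_lt // ltW.
have D0 : 0 <= Dk a k by lra.
have a01 : 0 < a < 1 by apply/andP.
rewrite dmin_eq // in Hlo; rewrite dmax_eq // in Hhi; last by apply/andP; split; lra.
have [x [x0a Hx1 Hx2]] := @bwd R a k d k0 a01 Dp Hlo Hhi.
rewrite /Dplus /Dminus /Hset /=.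
split; first by split => //; apply/andP.
split; first by split; [apply/andP; split; lra | apply: mulr_gt0].
exists (1 - a + x); split; first by apply/andP; split; move: x0a => /andP[? ?]; lra.
move: x0a => /andP[x0 xa].
have A0 : 0 < 1 - a + x by lra.
apply/andP; split; last first.
  rewrite gt_eq.
  have -> : (1 - a + x) * (1 - (1 - a + x)) * (1 - a + x - 1 + a) / (1 - a + x) = x*(a-x)
    by field; lra.
  by [].
set M := x*(a-x) + (1-x)^+2/4.
have M0 : 0 < M by rewrite /M; have := sqr_ge0 (1-x); nra.
set d' := M / (1/k + 1).
have K0 : 0 < 1/k + 1 by apply: addr_gt0 => //; apply: divr_gt0.
have Sd' : [set d0 : R | 0 < d0 /\ (forall v : R, 0 <= v <= 1 - a + x ->
     d0 * (1 / k + 1) * (1 - a + x - v) - gtilde (1 - a + x) (1 - a) >= - gtilde v (1 - a))] d'.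
  split; first by apply: divr_gt0.
  move=> v /andP[v0 vA]; rewrite !gt_eq.
  have -> : d' * (1 / k + 1) = M by rewrite /d' divfK //; apply: lt0r_neq0.
  have E : (1 - a + x) * (1 - (1 - a + x)) * (1 - a + x - 1 + a) - v * (1 - v) * (v - 1 + a) =
       (1 - a + x - v) * (x*(a-x) + v*(1-x) - v^+2) by ring.
  have : (1 - a + x - v) * (x*(a-x) + v*(1-x) - v^+2) <= (1 - a + x - v) * M.
    apply: ler_wpM2l; first lra.
    rewrite /M; have := sqr_ge0 ((1-x)/2 - v); nra.
  lra.
apply: (le_lt_trans (y := d')).
  apply: ge_inf => //; exists 0 => z [] z0 _; lra.
rewrite /d' ltr_pdivrMr //.
have -> : d * k * (1 / k + 1) = d * (1 + k) by field; lra.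
by [].
Qed.
End M4.



Definition xmF (R : realType) (p : R * R) : R :=
  (p.2 + 2 * p.1 - 2 * Num.sqrt (p.1^+2 + p.2 * p.1 - p.2))/(p.2+4).
Definition FF (R : realType) (p : R * R) : R :=
  Num.max (@xmF R p) (p.1/2) * (p.1 - Num.max (@xmF R p) (p.1/2)) / p.2.

Lemma FF_cont (R : realType) : {within @adom R, continuous (@FF R)}.
Proof.
apply: continuous_in_subspaceT => p; rewrite inE => -[k0 _]; rewrite /FF /xmF.
idtac "G". contT (R * R)%type. idtac "H".
all: by rewrite gt_eqF // ?addr_gt0.
Qed.

Lemma FF_eq (R : realType) : {in @adom R, @FF R =1 (fun p : R * R => dmax p.1 p.2)}.
Proof.
move=> [a k]; rewrite inE /adom /= => -[k0 /andP[ha h1]].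
have a0 : 0 < a by have := @astar_pos R k k0; lra.
have D0 : 0 <= Dk a k by rewrite -astar_le // ltW.
have N0 : 0 < k + 4 by lra.
rewrite /FF /xmF /= dmax_eq //; last by apply/andP.
rewrite -/(Dk a k); set s := Num.sqrt (Dk a k).
have s0 : 0 <= s by apply: sqrtr_ge0.
case: ifP => hb.
  rewrite max_r; first by field; lra.
  rewrite ler_pdivrMr //; nra.
have hb' : 4*s <= k*(2-a) by rewrite leNgt hb.
rewrite max_l; last by rewrite ler_pdivlMr //; nra.
have h' : (-s)^+2 = Dk a k by rewrite sqrrN sqr_sqrtr.
have := @Uxp R a k (-s) k0 h'.
have -> : (k + 2 * a + 2 * - s) = k + 2*a - 2*s by ring.
have -> : 2 - a - - s = 2 - a + s by ring.
move=> E; rewrite E mulrC mulKf //; apply: lt0r_neq0 => //.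
Qed.

Lemma dmax_cont (R : realType) : {within @adom R, continuous (fun p : R * R => dmax p.1 p.2)}.
Proof. exact: (subspace_eq_continuous (@FF_eq R) (@FF_cont R)). Qed.

Theorem corollary2p10 (R : realType) :
  {within @adom R, continuous (fun p : R * R => dmin p.1 p.2)} /\
  {within @adom R, continuous (fun p : R * R => dmax p.1 p.2)} /\
  forall k : R, 0 < k ->
    (forall a : R, astar k <= a <= 1 ->
       0 <= dmin a k /\ dmin a k <= dmax a k /\ dmax a k <= dplus a k) /\
    dmax (astar k) k = dmin (astar k) k /\
    Dplus k = [set p : R * R | Hset p /\ astar k < p.1 /\
                               dmin p.1 k < p.2 < dmax p.1 k].
Proof.
split.
  apply: continuous_in_subspaceT => p; rewrite inE => -[k0 _].
  rewrite /dmin; apply: (@cdiv R (R * R)%type); cont.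
  have h : 0 < (4 + p.2) ^+ 2 :> R by apply: exprn_gt0; lra.
  by rewrite gt_eqF.
split; first exact: dmax_cont.
move=> k k0.
have [as0 as1] := andP (@astar_pos R k k0).
have N0 : 0 < k + 4 by lra.
split.
  move=> a /andP[ha a1'].
  have a0 : 0 < a by lra.
  have D0 : 0 <= Dk a k by rewrite -astar_le // ltW.
  have a01 : 0 < a <= 1 by apply/andP.
  rewrite dmin_eq // dmax_eq // dplus_eq //.
  set s := Num.sqrt (Dk a k).
  have s0 : 0 <= s by apply: sqrtr_ge0.
  have h : s^+2 = Dk a k by rewrite sqr_sqrtr.
  have sa : s <= a.
    have : s^+2 <= a^+2 by rewrite h /Dk; nra.
    by rewrite ler_sqr ?nnegrE; lra.
  have U1 : ((2-a-s)/(k+4))^+2 <= a^+2/(4*k).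
    have := @Uxp R a k s k0 h; set xp := (k + 2 * a + 2 * s) / (k + 4) => E.
    have : xp * (a - xp) <= a^+2/4 by have := sqr_ge0 (a - 2*xp); nra.
    rewrite E => H; rewrite ler_pdivlMr; last lra.
    nra.
  have U2 : ((2-a+s)/(k+4))^+2 <= a^+2/(4*k).
    have h' : (-s)^+2 = Dk a k by rewrite sqrrN.
    have := @Uxp R a k (-s) k0 h'; set xp := (k + 2 * a + 2 * - s) / (k + 4).
    have -> : 2 - a - - s = 2 - a + s by ring.
    move=> E.
    have : xp * (a - xp) <= a^+2/4 by have := sqr_ge0 (a - 2*xp); nra.
    rewrite E => H; rewrite ler_pdivlMr; last lra.
    nra.
  split; first exact: sqr_ge0.
  case: ifP => hb; split => //.
  rewrite !expr_div_n ler_pM2r; last by rewrite invr_gt0 exprn_gt0.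
  rewrite ler_sqr ?nnegrE; lra.
split.
  have D0 := @astar_D0 R k k0.
  have a01 : 0 < astar k <= 1 by apply/andP; split; lra.
  have D0' : 0 <= Dk (astar k) k by rewrite D0.
  rewrite (@dmin_eq R _ _ k0 D0') (@dmax_eq R _ _ a01 k0 D0').
  rewrite D0 sqrtr0 mulr0 ltNge.
  have -> : 0 <= k * (2 - astar k) by apply: mulr_ge0; lra.
  by rewrite /= addr0 subr0.
exact: Dplus_char.
Qed.
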